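(* Let $a_1,a_2$ be nonzero integers, $\Delta:=a_1^2+4a_2$ assumed not a perfect square, $\Delta_0$ the squarefree part of $\Delta$, and $K:=\mathbb{Q}(\sqrt{\Delta})$. Let $n$ be an odd positive integer with $3\nmid n$ whenever $\Delta_0=-3$, let $d$ be a positive integer dividing $n$, and let $\zeta_n=e^{2\pi i/n}$. Then for $a\in K$: $a\in K(\zeta_n)^d$ if and only if $a\in K^d$.
   Context: For a field $F$, $F^d$ denotes the set of $d$th powers of elements of $F$. *)

(* Defs.v *)
From mathcomp Require Import all_boot all_order all_algebra all_field.
Set Implicit Arguments. Unset Strict Implicit. Unset Printing Implicit Defensive.
Import Order.TTheory GRing.Theory Num.Theory.
Local Open Scope ring_scope.

Definition is_subfield (S : algC -> Prop) : Prop :=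
  [/\ S 0, S 1, (forall x y, S x -> S y -> S (x - y)),
      (forall x y, S x -> S y -> S (x * y)) & (forall x, S x -> S x^-1)].

Definition gen_field (G : algC -> Prop) (x : algC) : Prop :=
  forall S, is_subfield S -> (forall g, G g -> S g) -> S x.

Definition quad_field (D : int) : algC -> Prop :=
  gen_field (fun g => g = sqrtC (D%:~R)).

(* zeta_n = e^{2 pi i / n}: n.-root (-1) is e^{i pi / n} (minimal nonnegative argument). *)
Definition zeta (n : nat) : algC := (n.-root (-1)) ^+ 2.

Definition adjoin_zeta (D : int) (n : nat) : algC -> Prop :=
  gen_field (fun g => quad_field D g \/ g = zeta n).

Definition dth_powers (F : algC -> Prop) (d : nat) (a : algC) : Prop :=
  exists b, F b /\ a = b ^+ d.

Definition int_squarefree (z : int) : Prop :=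
  z != 0 /\ forall p : nat, prime p -> ~~ (p * p %| `|z|)%N.

Definition is_square_int (z : int) : Prop := exists m : int, z = m * m.

(* Main.v *)
Require Import Defs.
From HB Require Import structures.
From mathcomp Require Import all_boot all_order all_algebra all_field.
From mathcomp.algebra_tactics Require Import ring.
From mathcomp.zify Require Import zify.
From Stdlib Require Import Classical_Prop.
Import Order.TTheory GRing.Theory Num.Theory.
Local Open Scope ring_scope.
Set Implicit Arguments. Unset Strict Implicit.

Section Sub.
Variable S : algC -> Prop.
Hypothesis hS : is_subfield S.

Lemma sf0 : S 0. Proof. by case: hS. Qed.
Lemma sf1 : S 1. Proof. by case: hS. Qed.
Lemma sfB x y : S x -> S y -> S (x - y). Proof. by case: hS => _ _ h _ _; apply: h. Qed.
Lemma sfM x y : S x -> S y -> S (x * y). Proof. by case: hS => _ _ _ h _; apply: h. Qed.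
Lemma sfV x : S x -> S x^-1. Proof. by case: hS => _ _ _ _ h; apply: h. Qed.
Lemma sfN x : S x -> S (- x). Proof. by move=> Sx; rewrite -sub0r; apply: sfB => //; apply: sf0. Qed.
Lemma sfD x y : S x -> S y -> S (x + y).
Proof. by move=> Sx Sy; rewrite -[y]opprK; apply: sfB => //; apply: sfN. Qed.
Lemma sfDiv x y : S x -> S y -> S (x / y). Proof. by move=> Sx Sy; apply: sfM => //; apply: sfV. Qed.
Lemma sfX x k : S x -> S (x ^+ k).
Proof. by move=> Sx; elim: k => [|k IH]; [rewrite expr0; apply: sf1 | rewrite exprS; apply: sfM]. Qed.
Lemma sfn k : S k%:R.
Proof. by elim: k => [|k IH]; [apply: sf0 | rewrite -addn1 natrD; apply: sfD => //; apply: sf1]. Qed.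
Lemma sfz (z : int) : S z%:~R.
Proof. by case: z => k; rewrite ?NegzE ?mulrNz; [apply: sfn | apply: sfN; apply: sfn]. Qed.
Lemma sfQ x : x \in Crat -> S x.
Proof.
case/CratP => q ->; rewrite -[q]divq_num_den fmorph_div /= !rmorph_int.
by apply: sfDiv; apply: sfz.
Qed.
End Sub.

Lemma gen_sf G : is_subfield (gen_field G).
Proof.
split.
- by move=> S hS _; apply: sf0.
- by move=> S hS _; apply: sf1.
- by move=> x y hx hy S hS hG; apply: sfB => //; [apply: hx | apply: hy].
- by move=> x y hx hy S hS hG; apply: sfM => //; [apply: hx | apply: hy].
- by move=> x hx S hS hG; apply: sfV => //; apply: hx.
Qed.

Lemma gen_in G g : G g -> gen_field G g.
Proof. by move=> Gg S _ hG; apply: hG. Qed.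

Lemma gen_ind G S x : is_subfield S -> (forall g, G g -> S g) -> gen_field G x -> S x.
Proof. by move=> hS hG hx; apply: hx. Qed.

Lemma eq_sf (f g : {rmorphism algC -> algC}) : is_subfield (fun x => f x = g x).
Proof.
split=> [|||x y|x]; rewrite ?rmorph0 ?rmorph1 //.
- by move=> x y hx hy; rewrite !rmorphB hx hy.
- by move=> hx hy; rewrite !rmorphM hx hy.
- by move=> hx; rewrite !fmorphV hx.
Qed.

Lemma pre_sf (f : {rmorphism algC -> algC}) S : is_subfield S -> is_subfield (fun x => S (f x)).
Proof.
move=> hS; split=> [|||x y|x].
- by rewrite rmorph0; apply: sf0.
- by rewrite rmorph1; apply: sf1.
- by move=> x y hx hy; rewrite !rmorphB; apply: sfB.
- by move=> hx hy; rewrite !rmorphM; apply: sfM.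
- by move=> hx; rewrite !fmorphV; apply: sfV.
Qed.

Definition Kf (s : algC) := gen_field (fun g => g = s).
Definition Lf (s z : algC) := gen_field (fun g => Kf s g \/ g = z).

Lemma K_sf s : is_subfield (Kf s). Proof. exact: gen_sf. Qed.
Lemma L_sf s z : is_subfield (Lf s z). Proof. exact: gen_sf. Qed.
Lemma Ks s : Kf s s. Proof. exact: gen_in. Qed.
Lemma KL s z x : Kf s x -> Lf s z x.
Proof. by move=> Kx; apply: gen_in; left. Qed.
Lemma Lz s z : Lf s z z. Proof. by apply: gen_in; right. Qed.

Lemma agreeK s (f g : {rmorphism algC -> algC}) x : f s = g s -> Kf s x -> f x = g x.
Proof. by move=> e Kx; apply: (@gen_ind _ (fun y => f y = g y) x (eq_sf f g) _ Kx) => _ ->. Qed.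

Lemma agreeL s z (f g : {rmorphism algC -> algC}) x :
  f s = g s -> f z = g z -> Lf s z x -> f x = g x.
Proof.
move=> es ez Lx; apply: (@gen_ind _ (fun y => f y = g y) x (eq_sf f g) _ Lx).
by move=> y [Ky| ->] //; apply: (agreeK es Ky).
Qed.

Lemma sign s (f : {rmorphism algC -> algC}) : s ^+ 2 \in Crat -> f s = s \/ f s = - s.
Proof.
move=> sQ; have : f s ^+ 2 == s ^+ 2 by rewrite -rmorphXn aut_Crat.
by rewrite eqf_sqr => /orP[/eqP|/eqP]; [left|right].
Qed.

Lemma stableK s (f : {rmorphism algC -> algC}) x : s ^+ 2 \in Crat -> Kf s x -> Kf s (f x).
Proof.
move=> sQ Kx; apply: (@gen_ind (fun g => g = s) (fun y => Kf s (f y)) x (pre_sf f (K_sf s)) _ Kx).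
move=> _ ->; case: (sign f sQ) => ->; first exact: Ks.
by apply: (sfN (K_sf s)); exact: Ks.
Qed.

Lemma stableL s z (f : {rmorphism algC -> algC}) x :
  s ^+ 2 \in Crat -> Lf s z (f z) -> Lf s z x -> Lf s z (f x).
Proof.
move=> sQ fz Lx; apply: (@gen_ind (fun g => Kf s g \/ g = z) (fun y => Lf s z (f y)) x (pre_sf f (L_sf s z)) _ Lx).
by move=> y [Ky| ->] //; apply: KL; apply: stableK.
Qed.
Local Notation pQtoC := (map_poly (ratr : rat -> algC)).
Lemma aut_conj_exists (x y : algC) : root (minCpoly x) y ->
  exists nu : {rmorphism algC -> algC}, nu x = y.
Proof.
move=> ry.
have [r Dr] := closed_field_poly_normal (minCpoly x).
rewrite (monicP (minCpoly_monic x)) scale1r in Dr.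
have xr : x \in r by rewrite -root_prod_XsubC -Dr root_minCpoly.
have yr : y \in r by rewrite -root_prod_XsubC -Dr.
have [Qs [QsC [s1 Ds1 gen]]] := num_field_exists r.
have [p [Dp mon_p] dv_p] := minCpolyP x.
have /mapP[xs _ Dxs] : x \in map QsC s1 by rewrite Ds1.
have /mapP[ys _ Dys] : y \in map QsC s1 by rewrite Ds1.
pose pQ := map_poly (in_alg Qs) p.
have pQC : map_poly QsC pQ = pQtoC p.
  rewrite -map_poly_comp; apply: eq_map_poly => b.
  by rewrite /= alg_num_field fmorph_rat.
have homQ1: kHom 1 1 (\1%VF : 'End(Qs)) by rewrite kHom1.
have root_ys : root (map_poly \1%VF (minPoly 1 xs)) ys.
  have ->: map_poly \1%VF (minPoly 1 xs) = minPoly 1 xs.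
    by apply: map_poly_id => a _; rewrite id_lfunE.
  have /polyOver1P[q1 Dq1] := minPolyOver 1 xs.
  have : root (pQtoC q1) x.
    have := root_minPoly 1 xs; rewrite -(fmorph_root QsC) Dq1 -map_poly_comp.
    have -> : map_poly (QsC \o in_alg Qs) q1 = pQtoC q1.
      by apply: eq_map_poly => b; rewrite /= alg_num_field fmorph_rat.
    by rewrite -Dxs.
  rewrite dv_p => /dvdpP[r1 Dq].
  rewrite -(fmorph_root QsC) Dq1 -map_poly_comp.
  have -> : map_poly (QsC \o in_alg Qs) q1 = pQtoC q1.
    by apply: eq_map_poly => b; rewrite /= alg_num_field fmorph_rat.
  rewrite Dq rmorphM rootM; apply/orP; right; by move: ry; rewrite Dp Dys.
pose f := kHomExtend 1 \1 xs ys.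
have homf : kHom 1 <<1; xs>> f by apply: (kHomExtendP (subvv _) homQ1 root_ys).
have fx : f xs = ys by apply: (kHomExtend_val homQ1 root_ys).
have split : splittingFieldFor <<1; xs>> pQ fullv.
  exists s1.
    apply: eqp_trans (eqpxx _) _; rewrite (_ : pQ = \prod_(z <- s1) ('X - z%:P)) ?eqpxx //.
    apply: (map_poly_inj QsC); rewrite pQC -Dp Dr -Ds1 big_map rmorph_prod.
    by apply: eq_bigr => z _; rewrite /= map_polyXsubC.
  apply/eqP; rewrite eqEsubv subvf -gen adjoin_seqSl //.
  exact: sub1v.
have [g homg Dg] := kHom_extends (sub1v _) homf (alg_polyOver _ _) split.
have gM : monoid_morphism g by apply/kHom_monoid_morphism.
pose gaM := GRing.isZmodMorphism.Build _ _ g (raddfB g).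
pose gmM := GRing.isMonoidMorphism.Build _ _ g gM.
pose gRM : {rmorphism Qs -> Qs} := HB.pack (fun_of_lfun g) gaM gmM.
have [nu Dnu] := extend_algC_subfield_aut QsC gRM.
exists nu; rewrite Dxs -Dnu /= -Dg ?fx //.
exact: memv_adjoin.
Qed.
Lemma other_root (x : algC) : x \notin Crat ->
  exists2 y, root (minCpoly x) y & y != x.
Proof.
move=> xQ.
have [r Dr] := closed_field_poly_normal (minCpoly x).
rewrite (monicP (minCpoly_monic x)) scale1r in Dr.
have xr : x \in r by rewrite -root_prod_XsubC -Dr root_minCpoly.
have [p [Dp mon_p] dv_p] := minCpolyP x.
have Dr2 : minCpoly x = ('X - x%:P) * \prod_(z <- rem x r) ('X - z%:P).
  by rewrite Dr (perm_big _ (perm_to_rem xr)) big_cons.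
have simple : ~~ root (minCpoly x)^`() x.
  apply/negP; rewrite Dp deriv_map dv_p => dvp.
  have sp : (1 < size p)%N.
    by have := size_minCpoly x; rewrite Dp size_map_poly.
  have pnz : p != 0 by apply: monic_neq0.
  have nz : p^`() != 0.
    apply/eqP => Hd; have := congr1 (fun q : {poly rat} => q`_(size p).-2) Hd.
    rewrite /= coef_deriv coef0.
    have -> : (size p).-2.+1 = (size p).-1 by case: (size p) sp => [|[|k]].
    move/eqP; rewrite mulrn_eq0 -lead_coefE lead_coef_eq0 (negbTE pnz) orbF.
    by case: (size p) sp => [|[|k]].
  have := dvdp_leq nz dvp; have := lt_size_deriv pnz.
  by move=> a b; have := leq_ltn_trans b a; rewrite ltnn.
case E: (rem x r) => [|y r'].
  exfalso; move: xQ; rewrite Dr2 E big_nil mulr1 in Dp.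
  have := congr1 (fun q : {poly algC} => q`_0) Dp.
  rewrite coefB coefX coefC /= add0r coef_map /= => /(congr1 (fun z => - z)).
  by rewrite opprK => ->; rewrite rpredN Crat_rat.
exists y.
  by rewrite Dr root_prod_XsubC (perm_mem (perm_to_rem xr)) E !inE eqxx orbT.
apply: contraNneq simple => yx.
rewrite Dr2 E big_cons derivM derivXsubC mul1r rootE !hornerE.
by rewrite yx subrr !mul0r addr0.
Qed.

Lemma aut_fixed_Crat x : (forall nu : {rmorphism algC -> algC}, nu x = x) -> x \in Crat.
Proof.
move=> H; apply/negPn/negP => /other_root [y ry yx].
by have [nu e] := aut_conj_exists ry; move: yx; rewrite -e H eqxx.
Qed.

Lemma moved_exists x : x \notin Crat -> exists nu : {rmorphism algC -> algC}, nu x != x.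
Proof.
by case/other_root => y ry yx; have [nu e] := aut_conj_exists ry; exists nu; rewrite e.
Qed.

Lemma fixK s c : s \notin Crat -> s ^+ 2 \in Crat ->
  (forall f g : {rmorphism algC -> algC}, f s = g s -> f c = g c) -> Kf s c.
Proof.
move=> sQ s2Q P.
have [rho rs] := moved_exists sQ.
have rhos : rho s = - s by case: (sign rho s2Q) => // e; rewrite e eqxx in rs.
have s0 : s != 0 by apply: contraNneq sQ => ->; apply: Crat0.
pose x := c + rho c; pose y := (c - rho c) / s.
have Hc : c = (x + y * s) / 2.
  rewrite /x /y mulfVK // addrCA addrK; field.
  by [].
have fix1 (f : {rmorphism algC -> algC}) : f s = s -> f c = c /\ f (rho c) = rho c.
  move=> fs; split; first by apply: (P f idfun).
  by rewrite -[f (rho c)]/((f \o rho) c); apply: P; rewrite /= rhos rmorphN fs.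
have fix2 (f : {rmorphism algC -> algC}) : f s = - s -> f c = rho c /\ f (rho c) = c.
  move=> fs; split; first by apply: P; rewrite fs rhos.
  by rewrite -[f (rho c)]/((f \o rho) c); apply: (P _ idfun); rewrite /= rhos rmorphN fs opprK.
have xQ : x \in Crat.
  apply: aut_fixed_Crat => f; rewrite /x rmorphD.
  case: (sign f s2Q) => fs; first by case: (fix1 f fs) => -> ->.
  by case: (fix2 f fs) => -> ->; rewrite addrC.
have yQ : y \in Crat.
  apply: aut_fixed_Crat => f; rewrite /y fmorph_div rmorphB.
  case: (sign f s2Q) => fs; first by case: (fix1 f fs) => -> ->; rewrite fs.
  case: (fix2 f fs) => -> ->; rewrite fs.
  by field.
have hK := K_sf s.
rewrite Hc; apply: (sfDiv hK); last by apply: (sfn hK 2).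
apply: (sfD hK); first by apply: (sfQ hK).
by apply: (sfM hK); [apply: (sfQ hK) | apply: Ks].
Qed.

Lemma core s z (n d t : nat) (sig : {rmorphism algC -> algC}) a b :
  s \notin Crat -> s ^+ 2 \in Crat -> z ^+ n = 1 -> (d %| n)%N -> (0 < d)%N ->
  (1 < t)%N -> coprime t.-1 d ->
  (forall w, w ^+ n = 1 -> sig w = w ^+ t) -> sig s = s ->
  Lf s z b -> b ^+ d = a -> Kf s a -> exists c, Kf s c /\ a = c ^+ d.
Proof.
move=> sQ s2Q zn dn d0 t1 cop sigw sigs Lb ba Ka.
have hL := L_sf s z; have hK := K_sf s.
have t0 : (0 < t.-1)%N by lia.
have [km kn Ekm _] := egcdnP d t0.
rewrite (eqP cop) in Ekm.
have Hu (xi : algC) : xi ^+ d = 1 -> xi ^+ (t * km) = xi ^+ km.+1.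
  move=> xid; have -> : (t * km = km + (kn * d + 1))%N.
    move: Ekm; have -> : t = t.-1.+1 by lia.
    rewrite mulSn /=; nia.
  by rewrite !exprD mulnC exprM xid expr1n mul1r expr1 -exprSr.
have mun (xi : algC) : xi ^+ d = 1 -> xi ^+ n = 1.
  by move=> xid; rewrite -(divnK dn) mulnC exprM xid expr1n.
have [->|a0] := eqVneq a 0.
  by exists 0; split; [apply: (sf0 hK) | rewrite expr0n gtn_eqF].
have b0 : b != 0 by apply: contraNneq a0 => b0; rewrite -ba b0 expr0n gtn_eqF.
have Lsb : Lf s z (sig b).
  apply: stableL => //; rewrite sigw //; apply: (sfX hL); apply: Lz.
have siga : sig a = a by apply: (agreeK (g := idfun)) Ka.
pose om := sig b / b.
have omd : om ^+ d = 1 by rewrite expr_div_n -rmorphXn ba siga divff.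
have om0 : om != 0 by rewrite mulf_neq0 ?invr_eq0 ?fmorph_eq0.
pose eta := om ^+ km.
have etad : eta ^+ d = 1 by rewrite -exprM mulnC exprM omd expr1n.
have eta0 : eta != 0 by rewrite expf_neq0.
pose c := b / eta.
have sigc : sig c = c.
  rewrite /c fmorph_div (sigw eta) ?mun // /eta -exprM mulnC Hu // exprSr /om.
  by field; rewrite ?om0 ?b0 ?fmorph_eq0 // expf_neq0 //.
have cd : a = c ^+ d by rewrite expr_div_n etad divr1.
have Lc : Lf s z c.
  by apply: (sfDiv hL) => //; apply: (sfX hL); apply: (sfDiv hL).
have c0 : c != 0 by rewrite mulf_neq0 ?invr_eq0.
exists c; split => //.
apply: fixK => // f g fgs.
have comm (h : {rmorphism algC -> algC}) : sig (h c) = h c.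
  have e : (sig \o h) c = (h \o sig) c.
    apply: (agreeL _ _ Lc) => /=.
      by rewrite sigs; case: (sign h s2Q) => ->; rewrite ?rmorphN sigs.
    by rewrite (sigw z) // (sigw (h z)) ?rmorphXn // -rmorphXn zn rmorph1.
  by move: e => /= ->; rewrite sigc.
pose xi := f c / g c.
have gc0 : g c != 0 by rewrite fmorph_eq0.
have xid : xi ^+ d = 1.
  rewrite expr_div_n -!rmorphXn -cd (agreeK fgs Ka) divff // fmorph_eq0 //.
have sxi : sig xi = xi by rewrite fmorph_div !comm.
have : xi ^+ t = xi by rewrite -sigw ?mun.
move=> xit; have := Hu xi xid; rewrite exprM xit exprSr => e.
have xi0 : xi ^+ km != 0 by rewrite expf_neq0 // mulf_neq0 ?invr_eq0 ?fmorph_eq0.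
have xi1 : xi = 1 by apply: (mulfI xi0); rewrite mulr1 -e.
by rewrite -[f c](divfK gc0) -/xi xi1 mul1r.
Qed.

Lemma Aint_sq (x : algC) : x ^+ 2 \in Num.int -> x \in Aint.
Proof.
move=> x2; apply: (@root_monic_Aint ('X^2 - (x ^+ 2)%:P)).
- by rewrite rootE !hornerE subrr.
- exact: monicXnsubC.
- by rewrite polyOverXnsubC.
Qed.

Lemma aut_power (n : nat) (sig : {rmorphism algC -> algC}) : (0 < n)%N ->
  exists t : nat, forall w, w ^+ n = 1 -> sig w = w ^+ t.
Proof.
move=> n0; have [z0 pz] := C_prim_root_exists n0.
have : (sig z0) ^+ n = 1 by rewrite -rmorphXn prim_expr_order // rmorph1.
case/(prim_rootP pz) => i e; exists i => w wn.
have [j ->] := prim_rootP pz wn.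
by rewrite rmorphXn e -!exprM mulnC.
Qed.

Lemma sq3 : int_squarefree (-3).
Proof.
split => // p pp; apply/negP => /dvdn_leq /= h.
have := prime_gt1 pp; have := h isT; nia.
Qed.

Lemma int_m3 (D m0 : int) : m0 * m0 = -3 * D -> exists m : int, D = -3 * m ^+ 2.
Proof.
move=> e.
have h3 : (3 %| `|m0| * `|m0|)%N.
  apply/dvdnP; exists `|D|%N; lia.
rewrite Euclid_dvdM // orbb in h3.
case/dvdnP: h3 => k hk.
exists k%:Z; lia.
Qed.

Lemma find_sig3 (D : int) (w3 : algC) : 3.-primitive_root w3 ->
  (forall m : int, D <> -3 * m ^+ 2) ->
  exists sig : {rmorphism algC -> algC},
    sig (sqrtC D%:~R) = sqrtC D%:~R /\ sig w3 != w3.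
Proof.
move=> pw nD; set s := sqrtC D%:~R.
have w31 : w3 != 1.
  by apply/negP => /eqP e; have := prim_order_dvd pw 1; rewrite expr1 e eqxx.
have w33 : w3 ^+ 3 = 1 by apply: prim_expr_order.
have hw : w3 ^+ 2 + w3 + 1 = 0.
  have : (w3 - 1) * (w3 ^+ 2 + w3 + 1) = 0.
    by rewrite -[RHS](subrr 1) -{3}w33; ring.
  by move/eqP; rewrite mulf_eq0 subr_eq0 (negbTE w31) /= => /eqP.
pose s3 := 2 * w3 + 1.
have s32 : s3 ^+ 2 = -3.
  have -> : s3 ^+ 2 = 4 * (w3 ^+ 2 + w3 + 1) - 3 by rewrite /s3; ring.
  by rewrite hw mulr0 sub0r.
have s30 : s3 != 0.
  apply/negP => /eqP e; move: s32; rewrite e expr0n /= => /eqP.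
  by rewrite eq_sym oppr_eq0 pnatr_eq0.
have s32Q : s3 ^+ 2 \in Crat by rewrite s32 rpredN rpred_nat.
have s2 : s ^+ 2 = D%:~R by rewrite /s sqrtCK.
have s2Q : s ^+ 2 \in Crat by rewrite s2 rpred_int.
have moves (f : {rmorphism algC -> algC}) : f s3 = - s3 -> f w3 != w3.
  move=> fs; apply/eqP => fw; move: fs; rewrite /s3 rmorphD rmorphM rmorph1 fw rmorph_nat -/s3.
  by move/eqP; rewrite -subr_eq0 opprK -mulr2n mulrn_eq0 /= (negbTE s30).
have cs3 : Num.conj_op s3 = - s3.
  case: (sign Num.conj_op s32Q) => // e.
  have := mul_conjC_ge0 s3; rewrite e -expr2 s32 oppr_ge0.
  by rewrite (ler_nat algC 3 0).
case: (sign Num.conj_op s2Q) => cs.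
  by exists Num.conj_op; split => //; apply: moves.
case: (classic (exists f : {rmorphism algC -> algC}, f s = - s /\ f s3 = s3)).
  case=> f [f1 f2]; exists (f \o Num.conj_op); split => /=.
    by rewrite cs rmorphN f1 opprK.
  by apply: (moves (f \o Num.conj_op : {rmorphism algC -> algC})) => /=; rewrite cs3 rmorphN f2.
move=> N1.
case: (classic (exists f : {rmorphism algC -> algC}, f s = s /\ f s3 = - s3)).
  by case=> f [f1 f2]; exists f; split => //; apply: moves.
move=> N2; exfalso.
pose v := s * s3.
have vQ : v \in Crat.
  apply: aut_fixed_Crat => f; rewrite /v rmorphM.
  case: (sign f s2Q) => e1; case: (sign f s32Q) => e2; rewrite e1 e2 ?mulrNN //.
  - by case: N2; exists f.
  - by case: N1; exists f.
have vA : v \in Aint.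
  rewrite /v rpredM // Aint_sq //; first by rewrite s2 intr_int.
  by rewrite s32 rpredN intr_nat.
have /intrP [m0 e] := Cint_rat_Aint vQ vA.
have : m0 * m0 = -3 * D.
  apply: (@intr_inj algC); rewrite !intrM -e /v mulrACA -!expr2 s2 s32.
  by rewrite mulrC.
by case/int_m3 => m; apply: nD.
Qed.

Lemma Ldiv s z (d e : nat) a b : (e %| d)%N -> Lf s z b -> b ^+ d = a ->
  exists b', Lf s z b' /\ b' ^+ e = a.
Proof.
move=> ed Lb ba; exists (b ^+ (d %/ e)); split; first exact: (sfX (L_sf s z)).
by rewrite -exprM divnK.
Qed.

Lemma combine s (e1 e2 : nat) a c1 c2 : (0 < e1)%N -> coprime e1 e2 ->
  Kf s c1 -> Kf s c2 -> a = c1 ^+ e1 -> a = c2 ^+ e2 -> a != 0 ->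
  exists c, Kf s c /\ a = c ^+ (e1 * e2).
Proof.
move=> e10 cop K1 K2 a1 a2 a0.
have [km kn Ekm _] := egcdnP e2 e10; rewrite (eqP cop) in Ekm.
have c10 : c1 != 0 by apply: contraNneq a0 => c0; rewrite a1 c0 expr0n gtn_eqF.
have hK := K_sf s.
exists (c2 ^+ km / c1 ^+ kn); split.
  by apply: (sfDiv hK); apply: (sfX hK).
rewrite expr_div_n -!exprM.
have -> : (km * (e1 * e2) = e2 * (km * e1))%N by nia.
have -> : (kn * (e1 * e2) = e1 * (kn * e2))%N by nia.
rewrite (exprM c2 e2) (exprM c1 e1) -a1 -a2 Ekm exprD expr1 [_ ^+ _ * a]mulrC mulfK // expf_neq0 //.
Qed.

Lemma sqrt_notQ (D : int) : ~ is_square_int D -> sqrtC (D%:~R : algC) \notin Crat.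
Proof.
move=> nsq; apply/negP => sQ; apply: nsq.
have sA : sqrtC (D%:~R : algC) \in Aint by apply: Aint_sq; rewrite sqrtCK intr_int.
have /intrP [m e] := Cint_rat_Aint sQ sA.
exists m; apply: (@intr_inj algC); rewrite intrM -e -expr2 sqrtCK //.
Qed.

Lemma zeta_n n : (0 < n)%N -> zeta n ^+ n = 1.
Proof.
by move=> n0; rewrite /zeta -exprM mulnC exprM rootCK // expr2 mulrNN mulr1.
Qed.

Unset Implicit Arguments.

Theorem lemma5p4 (a1 a2 : int) (n d : nat) (a : algC) :
  a1 != 0 -> a2 != 0 ->
  ~ is_square_int (a1 ^+ 2 + 4 * a2) ->
  (0 < n)%N -> odd n ->
  (forall D0 m : int, int_squarefree D0 -> a1 ^+ 2 + 4 * a2 = D0 * m ^+ 2 ->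
     D0 = -3 -> ~~ (3 %| n)%N) ->
  (0 < d)%N -> (d %| n)%N ->
  quad_field (a1 ^+ 2 + 4 * a2) a ->
  (dth_powers (adjoin_zeta (a1 ^+ 2 + 4 * a2) n) d a <->
   dth_powers (quad_field (a1 ^+ 2 + 4 * a2)) d a).
Proof.
move=> _ _; move: (a1 ^+ 2 + 4 * a2) => D nsq n0 nodd h3 d0 dn Ka.
have Ka' : Kf (sqrtC D%:~R) a := Ka.
split; last first.
  by case=> b [Kb ->]; exists b; split => //; exact: (@KL (sqrtC D%:~R) (zeta n) b Kb).
case=> b [Lb ba].
have Lb' : Lf (sqrtC D%:~R) (zeta n) b := Lb.
move: Ka' Lb'; set s := sqrtC D%:~R; set z := zeta n => {}Ka {}Lb.
have sQ : s \notin Crat by apply: sqrt_notQ.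
have s2Q : s ^+ 2 \in Crat by rewrite /s sqrtCK rpred_int.
have zn : z ^+ n = 1 by apply: zeta_n.
have hK := K_sf s.
have [->|a0] := eqVneq a 0.
  by exists 0; split; [apply: (sf0 hK) | rewrite expr0n gtn_eqF].
have P2 : exists c2, Kf s c2 /\ a = c2 ^+ (d`_3^')%N.
  have e3 : (d`_3^' %| d)%N by apply: dvdn_part.
  have [b2 [Lb2 b2a]] := Ldiv e3 Lb (esym ba).
  have c2n : coprime 2 n by rewrite coprime2n.
  have [s2 Hs2] := Qn_aut_exists c2n.
  apply: (core (sig := s2 \o s2) (t := 4) sQ s2Q zn _ _ _ _ _ _ Lb2 b2a Ka).
  - exact: dvdn_trans e3 dn.
  - by rewrite part_gt0.
  - by [].
  - by apply: pnat_coprime (pnat_id _) (part_pnat _ _).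
  - by move=> w wn /=; rewrite (Hs2 w wn) rmorphXn (Hs2 w wn) -exprM.
  - by rewrite /=; case: (sign s2 s2Q) => e; rewrite e ?rmorphN e ?opprK.
have P3 : exists c1, Kf s c1 /\ a = c1 ^+ (d`_3)%N.
  have e3 : (d`_3 %| d)%N by apply: dvdn_part.
  have [b3 [Lb3 b3a]] := Ldiv e3 Lb (esym ba).
  have [d31|d3n1] := eqVneq (d`_3)%N 1%N.
    by exists a; split => //; rewrite d31 expr1.
  have d3d : (3 %| d)%N.
    have : (1 < d`_3)%N by rewrite ltn_neqAle eq_sym d3n1 part_gt0.
    by rewrite p_part_gt1 mem_primes => /and3P[].
  have n3 : (3 %| n)%N := dvdn_trans d3d dn.
  have [w3 pw] := C_prim_root_exists (isT : (0 < 3)%N).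
  have nD : forall m : int, D <> -3 * m ^+ 2.
    by move=> m e; move: (h3 (-3) m sq3 e erefl); rewrite n3.
  have [sig [sigs sigw]] := find_sig3 pw nD.
  have [t Ht] := aut_power sig n0.
  have w3n : w3 ^+ n = 1 by apply/eqP; rewrite -(prim_order_dvd pw).
  have w31 : w3 != 1.
    by apply/negP => /eqP e; have := prim_order_dvd pw 1; rewrite expr1 e eqxx.
  have t3 : (t %% 3 = 2)%N.
    have e : sig w3 = w3 ^+ (t %% 3) by rewrite prim_expr_mod // Ht.
    have : (t %% 3 < 3)%N by rewrite ltn_mod.
    move: e sigw; case: (t %% 3)%N => [|[|[|k]]] //.
    - rewrite expr0 -(rmorph1 sig) => /fmorph_inj e.
      by move: w31; rewrite e eqxx.
    - by move=> ->; rewrite expr1 eqxx.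
  apply: (core (sig := sig) (t := t) sQ s2Q zn _ _ _ _ _ _ Lb3 b3a Ka) => //.
  - exact: dvdn_trans e3 dn.
  - lia.
  - rewrite p_part coprime_sym; apply: coprimeXl.
    rewrite prime_coprime //; apply/negP => /dvdnP [k hk]; lia.
have [c1 [K1 a1']] := P3; have [c2 [K2 a2']] := P2.
have [c [Kc ac]] := combine (part_gt0 _ _) (coprime_partC _ _ _) K1 K2 a1' a2' a0.
by exists c; split => //; rewrite ac partnC.
Qed.
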